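(* Let $d\in\mathbb{N}$ with $d\ge 2$ and let $\omega\ge 1/d$. Then \[\left\{\boldsymbol{\alpha}\in K_d:\lim_{Q\to\infty}Q^\omega\min_{0<q\le Q}\|q\boldsymbol{\alpha}\|=0\right\}\subseteq E(d-1+d\omega).\]
   Context: For $\boldsymbol{x}\in\mathbb{R}^d$, $|\boldsymbol{x}|=\max_i|x_i|$ and $\|\boldsymbol{x}\|=\min_{\boldsymbol{p}\in\mathbb{Z}^d}|\boldsymbol{x}-\boldsymbol{p}|$; for $x\in\mathbb{R}$, $\|x\|$ is the distance to the nearest integer. $q$ ranges over integers. $K_d$ is the set of $\boldsymbol{\alpha}\in\mathbb{R}^d$ with $1,\alpha_1,\dots,\alpha_d$ linearly independent over $\mathbb{Q}$. For $\boldsymbol{r},\boldsymbol{\alpha}\in\mathbb{R}^d$, $\boldsymbol{r}\boldsymbol{\alpha}$ is the standard inner product. For real $\omega'\ge d$, \[E(\omega')=\left\{\boldsymbol{\alpha}\in K_d:\lim_{R\to\infty}R^{\omega'}\min\{\|\boldsymbol{r}\boldsymbol{\alpha}\|:\boldsymbol{r}\in\mathbb{Z}^d,\ 0<|\boldsymbol{r}|\le R\}=0\right\}.\] *)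

(* Defs.v *)
From HB Require Import structures.
From mathcomp Require Import all_boot all_order all_algebra.
From mathcomp Require Import all_classical all_reals all_analysis.
Set Implicit Arguments. Unset Strict Implicit. Unset Printing Implicit Defensive.
Import Order.TTheory GRing.Theory Num.Theory.
Import numFieldNormedType.Exports.
Local Open Scope classical_set_scope.
Local Open Scope ring_scope.

Section Defs.
Variable R : realType.

Definition distZ (x : R) : R := inf [set `|x - p%:~R| | p in [set: int]].

Definition supn (d : nat) (x : 'I_d -> R) : R := \big[Num.max/0]_(i < d) `|x i|.

Definition distZv (d : nat) (x : 'I_d -> R) : R :=
  inf [set supn (fun i => x i - (p i)%:~R) | p in [set: 'I_d -> int]].

Definition Kd (d : nat) : set ('I_d -> R) :=
  [set a | forall (c0 : rat) (c : 'I_d -> rat),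
      ratr c0 + \sum_(i < d) ratr (c i) * a i = 0 -> c0 = 0 /\ forall i, c i = 0].

Definition simmin (d : nat) (a : 'I_d -> R) (Q : R) : R :=
  inf [set distZv (fun i => q%:~R * a i) | q in [set q : int | 0 < q /\ q%:~R <= Q]].

Definition linmin (d : nat) (a : 'I_d -> R) (Rr : R) : R :=
  inf [set distZ (\sum_(i < d) (r i)%:~R * a i) |
        r in [set r : 'I_d -> int |
               0 < supn (fun i => (r i)%:~R) /\ supn (fun i => (r i)%:~R) <= Rr]].

Definition Eset (d : nat) (w' : R) : set ('I_d -> R) :=
  [set a | @Kd d a /\ (Rr `^ w' * @linmin d a Rr) @[Rr --> +oo] --> (0 : R)].

End Defs.

(* Main.v *)
Require Import Defs.
From HB Require Import structures.
From mathcomp Require Import all_boot all_order all_algebra.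
From mathcomp Require Import all_classical all_reals all_analysis.
From mathcomp Require Import zify ring lra.
Import Order.TTheory GRing.Theory Num.Theory.
Import numFieldNormedType.Exports.
Local Open Scope classical_set_scope.
Local Open Scope ring_scope.

Section K.
Variable R : realType.

Lemma count_ineq (N qn d K : nat) : (0 < d)%N -> (0 < N)%N -> (0 < qn)%N ->
  (qn * K <= N ^ d)%N -> (qn <= N ^ d)%N -> (qn * K.+1 < (2 * N).+1 ^ d)%N.
Proof.
move=> d0 N0 q0 h1 h2.
have h3 : ((2 * N) ^ d < (2 * N).+1 ^ d)%N by rewrite ltn_exp2r.
have h4 : (2 * N ^ d <= (2 * N) ^ d)%N.
  rewrite expnMn leq_mul2r; apply/orP; right.
  by rewrite -{1}(expn1 2) leq_exp2l.
rewrite mulnS. lia.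
Qed.

Lemma key (d : nat) (a : 'I_d -> R) (N qn : nat) (p : 'I_d -> int) (dl : R) :
 (0 < d)%N -> (0 < N)%N -> (0 < qn)%N -> (2 * qn <= N ^ d)%N -> 0 < dl ->
 (forall i, `|qn%:R * a i - (p i)%:~R| < dl) ->
 exists r : 'I_d -> int, (exists i, r i != 0) /\ (forall i, `|r i| <= (2*N)%:Z) /\
  exists m : int, `|\sum_i (r i)%:~R * a i - m%:~R| * (N ^ d)%:R <= 8 * d%:R * N%:R * dl.
Proof.
move=> d0 N0 q0 hqN dl0 hp.
pose eta i := qn%:R * a i - (p i)%:~R.
pose K := (N ^ d %/ qn)%N.
have K0 : (0 < K)%N by rewrite divn_gt0 //; lia.
have hK1 : (qn * K <= N ^ d)%N.
  have := divn_eq (N ^ d) qn; have := ltn_pmod (N ^ d) q0; rewrite -/K; lia.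
have hK2 : (N ^ d <= 2 * (qn * K))%N.
  have := divn_eq (N ^ d) qn; have := ltn_pmod (N ^ d) q0; rewrite -/K.
  move=> h1 h2; have : (qn <= qn * K)%N by rewrite leq_pmulr.
  lia.
pose W : R := 4 * d%:R * N%:R * dl / K%:R.
have Kr0 : 0 < K%:R :> R by rewrite ltr0n.
have W0 : 0 < W by rewrite /W divr_gt0 // !mulr_gt0 // ltr0n.
pose T := {ffun 'I_d -> 'I_(2*N).+1}.
pose rr (t : T) i : int := (t i : nat)%:Z.
pose v (t : T) : R := \sum_i (rr t i)%:~R * eta i + 2 * d%:R * N%:R * dl.
pose s (t : T) : int := \sum_i rr t i * p i.
pose f (t : T) : 'I_qn.-1.+1 * 'I_K.+1 :=
  (inord (absz (s t %% qn%:Z)%Z), inord (absz (Num.floor (v t / W)))).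
have [t1 [t2 [hne hf]]] : exists t1 t2, t1 != t2 /\ f t1 = f t2.
  apply: contrapT => hn.
  have inj : injective f.
    move=> x y hxy; apply/eqP; apply: contraT => hne; case: hn; by exists x, y.
  have := @leq_card _ _ f inj; rewrite card_ffun card_prod !card_ord prednK //.
  have := @count_ineq N qn d K d0 N0 q0 hK1 (_ : (qn <= N ^ d)%N).
  all: try lia.

have [i0 hi0] : exists i, t1 i != t2 i.
  apply: contrapT => hn; move/eqP: hne; apply; apply/ffunP => i.
  apply/eqP; apply: contraT => h; case: hn; by exists i.
pose r i := rr t1 i - rr t2 i.
have hrr : forall (t : T) i, (rr t i)%:~R = (t i : nat)%:R :> R by [].
have hb : forall t, `|\sum_i (rr t i)%:~R * eta i| <= 2 * d%:R * N%:R * dl.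
  move=> t; apply: le_trans (ler_norm_sum _ _ _) _.
  apply: le_trans (_ : \sum_(i < d) (2 * N%:R * dl) <= _).
    apply: ler_sum => i _; rewrite normrM hrr normr_nat; apply: ler_pM => //.
      by rewrite -(natrM R 2) ler_nat -ltnS ltn_ord.
    exact: ltW (hp i).
  rewrite sumr_const card_ord -[_ *+ d]mulr_natr.
  by have -> : 2 * N%:R * dl * d%:R = 2 * d%:R * N%:R * dl :> R by ring.
have hKW : K%:R * W = 4 * d%:R * N%:R * dl by rewrite /W; field; rewrite pnatr_eq0 -lt0n.
have hv : forall t, 0 <= v t <= K%:R * W.
  move=> t; have := hb t; rewrite ler_norml hKW /v => /andP [h1 h2].
  apply/andP; split; lra.
have hfl : forall t, (`|Num.floor (v t / W)| < K.+1)%N /\ 0 <= Num.floor (v t / W).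
  move=> t; have /andP [h1 h2] := hv t.
  have h3 : 0 <= v t / W by rewrite divr_ge0 // ltW.
  have h4 : v t / W < (K%:Z + 1)%:~R.
    rewrite ltr_pdivrMr // intrD; apply: le_lt_trans h2 _.
    rewrite ltr_pM2r //=; have -> : (K%:Z)%:~R = K%:R :> R by []. lra.
  have h5 : 0 <= Num.floor (v t / W) by rewrite floor_ge0.
  have h6 : Num.floor (v t / W) < K%:Z + 1 by rewrite floor_lt_int.
  split => //; lia.
have hmd : forall t, (`|(s t %% qn%:Z)%Z| < qn.-1.+1)%N /\ 0 <= (s t %% qn%:Z)%Z.
  move=> t; rewrite prednK //.
  have q0' : 0 < qn%:Z by rewrite ltz_nat.
  have h1 := ltz_pmod (s t) q0'.
  have h2 := modz_ge0 (s t) (lt0r_neq0 q0').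
  split; lia.
exists r; split.
  exists i0; rewrite /r /rr subr_eq0 eqz_nat; exact: hi0.
split.
  move=> i; rewrite /r /rr; have := ltn_ord (t1 i); have := ltn_ord (t2 i).
  move=> h1 h2; rewrite ler_norml; apply/andP; split; move: h1 h2; move: (nat_of_ord (t1 i)) (nat_of_ord (t2 i)) => x y hx hy; lia.
move: hf => [] /(congr1 (@nat_of_ord _)) h1 /(congr1 (@nat_of_ord _)) h2.
rewrite !inordK in h1 h2; try by case: (hfl t1); case: (hfl t2); case: (hmd t1); case: (hmd t2).
have hs : (s t1 %% qn%:Z)%Z = (s t2 %% qn%:Z)%Z.
  case: (hmd t1) => _ ?; case: (hmd t2) => _ ?; lia.
have hF : Num.floor (v t1 / W) = Num.floor (v t2 / W).
  case: (hfl t1) => _ ?; case: (hfl t2) => _ ?; lia.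
have hdv : (qn%:Z %| s t1 - s t2)%Z by rewrite -eqz_mod_dvd; apply/eqP.
pose m := ((s t1 - s t2) %/ qn%:Z)%Z.
have hm : m * qn%:Z = s t1 - s t2 by rewrite divzK.
have hsr : s t1 - s t2 = \sum_i r i * p i.
  by rewrite /s /r -sumrB; apply: eq_bigr => i _; rewrite mulrBl.
have e1 : (s t1 - s t2)%:~R = \sum_i (r i)%:~R * (p i)%:~R :> R.
  by rewrite hsr rmorph_sum; apply: eq_bigr => i _; rewrite rmorphM.
have e2 : \sum_i (r i)%:~R * eta i = qn%:R * (\sum_i (r i)%:~R * a i) - m%:~R * qn%:R.
  have -> : m%:~R * qn%:R = (s t1 - s t2)%:~R :> R by rewrite -hm intrM.
  rewrite e1 mulr_sumr -sumrB; apply: eq_bigr => i _; rewrite /eta; ring.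
have e3 : v t1 - v t2 = \sum_i (r i)%:~R * eta i.
  rewrite /v /r; under [X in _ = X]eq_bigr do rewrite intrB mulrBl.
  rewrite sumrB; ring.
have hW : `|v t1 - v t2| < W.
  have := floor_itv (v t1 / W); have := floor_itv (v t2 / W).
  rewrite hF intrD => /andP [a1 a2] /andP [b1 b2].
  have : `|v t1 / W - v t2 / W| < 1.
    rewrite ltr_norml; apply/andP; split; lra.
  have hWi : 0 < W^-1 by rewrite invr_gt0.
  by move=> h; rewrite -mulrBl normrM (gtr0_norm hWi) ltr_pdivrMr // mul1r in h.
exists m.
set X := \sum_i (r i)%:~R * a i - m%:~R.
have hX : qn%:R * `|X| < W.
  have -> : qn%:R * `|X| = `|v t1 - v t2|.
    rewrite e3 e2; have -> : qn%:R * (\sum_i (r i)%:~R * a i) - m%:~R * qn%:R = qn%:R * X by rewrite /X; ring.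
    by rewrite normrM normr_nat.
  exact: hW.
have hN : (N ^ d)%:R <= 2 * qn%:R * K%:R :> R.
  by rewrite -!natrM ler_nat; lia.
apply: le_trans (_ : `|X| * (2 * qn%:R * K%:R) <= _).
  by apply: ler_wpM2l.
have -> : `|X| * (2 * qn%:R * K%:R) = 2 * K%:R * (qn%:R * `|X|) by ring.
have -> : 8 * d%:R * N%:R * dl = 2 * K%:R * W :> R.
  by rewrite /W; field; rewrite pnatr_eq0 -lt0n.
apply: ler_wpM2l; [by rewrite mulr_ge0 | exact: ltW].
Qed.
End K.

Set Implicit Arguments.
Section H.
Variable R : realType.

Lemma supn_ge (d : nat) (x : 'I_d -> R) i : `|x i| <= supn x.
Proof.
rewrite /supn; have : i \in index_enum 'I_d by rewrite mem_index_enum.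
elim: (index_enum 'I_d) => [//|j s IH]; rewrite inE big_cons le_max.
by case/orP => [/eqP->|h]; [rewrite lexx | rewrite IH ?orbT].
Qed.

Lemma supn_le (d : nat) (x : 'I_d -> R) c : 0 <= c -> (forall i, `|x i| <= c) -> supn x <= c.
Proof.
move=> c0 h; rewrite /supn; apply: (big_ind (fun y => y <= c)) => //.
by move=> y z hy hz; rewrite ge_max hy hz.
Qed.

Lemma supn_lt (d : nat) (x : 'I_d -> R) c : 0 < c -> (forall i, `|x i| < c) -> supn x < c.
Proof.
move=> c0 h; rewrite /supn; apply: (big_ind (fun y => y < c)) => //.
by move=> y z hy hz; rewrite gt_max hy hz.
Qed.

Lemma distZ_lb (x : R) : has_lbound [set `|x - p%:~R| | p in [set: int]].
Proof. by exists 0 => _ [p _ <-]. Qed.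

Lemma distZ_ge0 (x : R) : 0 <= distZ x.
Proof.
apply: lb_le_inf; first by exists `|x - 0%:~R|, 0.
by move=> _ [p _ <-].
Qed.

Lemma distZ_le (x : R) (m : int) : distZ x <= `|x - m%:~R|.
Proof. by apply: (ge_inf (distZ_lb x)); exists m. Qed.

Lemma distZv_lt (d : nat) (x : 'I_d -> R) t : distZv x < t ->
  exists p : 'I_d -> int, forall i, `|x i - (p i)%:~R| < t.
Proof.
move=> h; have := inf_lt _ h; case => [|y [p _ <-] hy].
  by exists (supn (fun i => x i - (0 : int)%:~R)), (fun=> 0).
by exists p => i; apply: le_lt_trans hy; exact: (supn_ge (fun i => x i - (p i)%:~R) i).
Qed.

Lemma simmin_lt (d : nat) (a : 'I_d -> R) Q t : 1 <= Q -> simmin a Q < t ->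
  exists q : int, 0 < q /\ q%:~R <= Q /\ distZv (fun i => q%:~R * a i) < t.
Proof.
move=> Q1 h; have := inf_lt _ h; case => [|y [q [q0 qQ] <-] hy].
  by exists (distZv (fun i => (1 : int)%:~R * a i)), 1.
by exists q.
Qed.

Lemma linmin_le (d : nat) (a : 'I_d -> R) Rr (r : 'I_d -> int) :
  0 < supn (fun i => (r i)%:~R : R) -> supn (fun i => (r i)%:~R : R) <= Rr ->
  linmin a Rr <= distZ (\sum_(i < d) (r i)%:~R * a i).
Proof.
move=> h1 h2; rewrite /linmin; set S := (X in inf X).
apply: (@ge_inf _ S); last by exists r.
by exists 0 => _ [r' _ <-]; apply: distZ_ge0.
Qed.

Lemma linmin_ge0 (d : nat) (a : 'I_d -> R) Rr : (0 < d)%N -> 1 <= Rr -> 0 <= linmin a Rr.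
Proof.
move=> d0 R1; apply: lb_le_inf; last by move=> _ [r' _ <-]; apply: distZ_ge0.
exists (distZ (\sum_(i < d) ((fun _ => 1%:Z) i)%:~R * a i)), (fun _ => 1%:Z); split => //.
idtac.
  apply: lt_le_trans (supn_ge _ (Ordinal d0)); by rewrite normr1.
apply: le_trans R1; apply: supn_le => // i; by rewrite normr1.
Qed.

End H.

Unset Implicit Arguments.
Arguments supn_ge {R d} x i.
Arguments supn_le {R d} x c.
Arguments supn_lt {R d} x c.
Arguments distZ_ge0 {R} x.
Arguments distZ_le {R} x m.
Arguments distZv_lt {R d x t}.
Arguments simmin_lt {R d a Q t}.
Arguments linmin_le {R d} a {Rr r}.
Arguments linmin_ge0 {R d} a {Rr}.
Arguments key {R d} a {N qn p dl}.

Theorem lemma3 (R : realType) (d : nat) (w : R) :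
  (2 <= d)%N -> 1 / d%:R <= w ->
  [set a : 'I_d -> R | @Kd R d a /\ (Q `^ w * @simmin R d a Q) @[Q --> +oo] --> (0 : R)]
    `<=` @Eset R d (d%:R - 1 + d%:R * w).
Proof.
move=> d2 hw a [Ka H]; split => //.
have d0 : (0 < d)%N by lia.
set w' := d%:R - 1 + d%:R * w.
have hd1 : 1 <= d%:R :> R by rewrite ler1n.
have w0 : 0 < w by apply: lt_le_trans hw; rewrite divr_gt0 // ltr0n.
have w'0 : 0 <= w' by rewrite /w'; apply: addr_ge0; [lra | rewrite mulr_ge0 // ltW].
pose C := 4 `^ w' * (8 * d%:R * 2 `^ w).
have C0 : 0 < C by rewrite /C mulr_gt0 ?powR_gt0 // !mulr_gt0 ?powR_gt0 // ltr0n.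
apply/cvgrPdist_lt => e e0.
pose eps := e / (2 * C).
have eps0 : 0 < eps by rewrite /eps divr_gt0 // mulr_gt0.
have := (cvgrPdist_lt _ _).1 H eps eps0.
case=> M [Mr HM].
exists (4 * (`|M| + 2)); split; first by rewrite num_real.
move=> Rr hRr.
have M0 : 0 <= `|M| by [].
set f := Num.floor (Rr / 2).
have /andP [f1 f2] := floor_itv (Rr / 2).
rewrite intrD in f2.
have fM : (2 * `|M| + 3) < f%:~R by lra.
have f0 : 0 <= f by rewrite -(ler0z R); lra.
set N := absz f.
pose X : R := N%:R.
have hNf : X = f%:~R by rewrite /X /N -{2}(gez0_abs f0).
have X3 : 3 < X by rewrite hNf; lra.
have N0 : (0 < N)%N by rewrite -(ltr0n R) -/X; lra.
have X0 : 0 < X by lra.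
have h2X : 2 * X <= Rr by rewrite hNf; lra.
have hR4 : Rr <= 4 * X by rewrite hNf; lra.
have R1 : 1 <= Rr by lra.
have hXd : X <= X ^+ d by apply: ler_eXnr => //; lra.
pose Q := X ^+ d / 2.
have hQM : M < Q by rewrite /Q; have := ler_norm M; lra.
have Q1 : 1 <= Q by rewrite /Q; lra.
have Q0 : 0 < Q by lra.
have := HM Q hQM.
rewrite sub0r normrN => hQ.
have Qw0 : 0 < Q `^ w by apply: powR_gt0.
pose dl := eps / Q `^ w.
have dl0 : 0 < dl by rewrite /dl divr_gt0.
have hsim : simmin a Q < dl.
  rewrite /dl ltr_pdivlMr // mulrC; apply: le_lt_trans hQ; exact: ler_norm.
have [q [q0 [qQ hqv]]] := simmin_lt Q1 hsim.
have [p hp] := distZv_lt hqv.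
pose qn := absz q.
have hqn : (q%:~R : R) = qn%:R by rewrite /qn -{1}(gez0_abs (ltW q0)).
have hqN : (2 * qn <= N ^ d)%N.
  rewrite -(ler_nat R) natrM natrX -/X -hqn; move: qQ; rewrite /Q ler_pdivlMr // => h.
  by rewrite mulrC.
have qn0 : (0 < qn)%N by rewrite /qn absz_gt0 gt_eqF.
have hp' : forall i, `|qn%:R * a i - (p i)%:~R| < dl by move=> i; rewrite -hqn; exact: hp.
have [r [[i0 hi0] [hr [m hm]]]] := key a d0 N0 qn0 hqN dl0 hp'.
have hsup0 : 0 < supn (fun i => (r i)%:~R : R).
  apply: lt_le_trans (supn_ge _ i0); by rewrite normr_gt0 intr_eq0.
have hsupR : supn (fun i => (r i)%:~R : R) <= Rr.
  apply: le_trans h2X; apply: supn_le; first by rewrite mulr_ge0 // ltW.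
  move=> i; rewrite -intr_norm; have := hr i; rewrite -(ler_int R) => h.
  apply: le_trans h _; rewrite /X -natrM; exact: lexx.
have hlin : linmin a Rr <= `|\sum_(i < d) (r i)%:~R * a i - m%:~R|.
  apply: le_trans (linmin_le a hsup0 hsupR) _; exact: distZ_le.
set Y := `|\sum_(i < d) (r i)%:~R * a i - m%:~R| in hlin hm.
have lin0 : 0 <= linmin a Rr by apply: linmin_ge0.
have Xd0 : 0 < X ^+ d by rewrite exprn_gt0.
have hY : Y <= 8 * d%:R * X * dl / X ^+ d.
  by rewrite ler_pdivlMr // -natrX.
pose A := X `^ (d%:R * w).
have A0 : 0 < A by apply: powR_gt0.
have P0 : 0 < 2 `^ w by apply: powR_gt0.
have hQw : Q `^ w = A / 2 `^ w.
  have : (Q * 2) `^ w = Q `^ w * 2 `^ w by rewrite powRM // ltW.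
  have -> : Q * 2 = X ^+ d by rewrite /Q; field.
  rewrite -powR_mulrn; last exact: ltW.
  by rewrite -powRrM => h; rewrite /A h; field; rewrite gt_eqF.
have hXw' : Rr `^ w' <= 4 `^ w' * (X ^+ d * X^-1 * A).
  apply: le_trans (_ : (4 * X) `^ w' <= _).
    have Rr0 : 0 <= Rr by apply: le_trans R1.
    by apply: ge0_ler_powR => //; rewrite ?nnegrE ?mulr_ge0 ?Rr0 ?(ltW X0).
  rewrite powRM ?(ltW X0) //.
  rewrite /w' (@powRD _ X); last by rewrite (gt_eqF X0) implybT.
  rewrite (@powRD _ X); last by rewrite (gt_eqF X0) implybT.
  rewrite powR_mulrn; last exact: ltW.
  by rewrite powR_inv1 ?(ltW X0) // /A.
rewrite sub0r normrN ger0_norm; last by rewrite mulr_ge0 // powR_ge0.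
apply: le_lt_trans (_ : C * eps < e); last first.
  rewrite /eps; have -> : C * (e / (2 * C)) = e / 2 by field; rewrite gt_eqF.
  by rewrite ltr_pdivrMr // ltr_pMr // ltr1n.
apply: le_trans (_ : Rr `^ w' * Y <= _).
  by apply: ler_wpM2l; [exact: powR_ge0 | exact: hlin].
apply: le_trans (_ : (4 `^ w' * (X ^+ d * X^-1 * A)) * (8 * d%:R * X * dl / X ^+ d) <= _).
  apply: ler_pM => //; [exact: powR_ge0 | apply: le_trans hlin; exact: lin0].
rewrite le_eqVlt; apply/orP; left; apply/eqP.
rewrite /dl hQw /C; field.
by rewrite -/X (gt_eqF Xd0) (gt_eqF P0) (gt_eqF A0) (gt_eqF X0).
Qed.
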